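(* For all integers $n\geqslant 1$ and $d\geqslant 2$, \[ f(n,d)\leqslant n+\log_2 n\cdot f(n,d-1). \]
   Context: A box in $\mathbb R^d$ is a set of the form $[a_1,b_1]\times\cdots\times[a_d,b_d]$ (edges parallel to the coordinate axes). For a family $\mathscr B$ of boxes, $\nu(\mathscr B)$ is the maximal number of pairwise disjoint members of $\mathscr B$, and $\tau(\mathscr B)$ is the minimal number of points in a set meeting every member of $\mathscr B$. For integers $n\geqslant 1$, $d\geqslant 1$, $f(n,d)$ denotes the supremum of $\tau(\mathscr B)$ over all families $\mathscr B$ of boxes in $\mathbb R^d$ with $\nu(\mathscr B)=n$; by convention $f(0,d)=0$. The statement presupposes that these quantities are finite. *)

(* Defs.v *)
From Stdlib Require Import Reals.
From mathcomp Require Import ssreflect ssrfun ssrbool eqtype ssrnat fintype.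

Open Scope R_scope.

Definition point (d : nat) := 'I_d -> R.

Record box (d : nat) := Box { lo : point d; hi : point d }.
Arguments lo {d}. Arguments hi {d}.

Definition box_wf {d} (B : box d) : Prop := forall i, lo B i <= hi B i.

Definition in_box {d} (x : point d) (B : box d) : Prop :=
  forall i, lo B i <= x i <= hi B i.

Definition boxes_disjoint {d} (B C : box d) : Prop :=
  ~ (exists x : point d, in_box x B /\ in_box x C).

Definition box_family (d : nat) := box d -> Prop.

Definition family_wf {d} (F : box_family d) : Prop := forall B, F B -> box_wf B.

Definition has_packing {d} (F : box_family d) (k : nat) : Prop :=
  exists g : 'I_k -> box d,
    (forall i, F (g i)) /\ (forall i j, i <> j -> boxes_disjoint (g i) (g j)).

Definition nu_eq {d} (F : box_family d) (n : nat) : Prop :=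
  has_packing F n /\ ~ has_packing F n.+1.

Definition pierced_by {d} (F : box_family d) (k : nat) : Prop :=
  exists p : 'I_k -> point d, forall B, F B -> exists i, in_box (p i) B.

Definition log2 (x : R) : R := ln x / ln 2.

(* Main.v *)
Require Import Defs.
From Stdlib Require Import Reals Lra Lia ClassicalEpsilon Classical.
From mathcomp Require Import ssreflect ssrfun ssrbool eqtype ssrnat fintype finset div prime.
From mathcomp Require Import zify.

Open Scope R_scope.

Lemma disj_sym {d} (B C : box d) : boxes_disjoint B C -> boxes_disjoint C B.
Proof. move=> H [x [h1 h2]]; apply: H; by exists x; split. Qed.

Lemma disj_coord {d} (B C : box d) c : hi B c < lo C c -> boxes_disjoint B C.
Proof. move=> H [x [h1 h2]]; have := h1 c; have := h2 c; lra. Qed.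

Lemma packing_mono {d} (F : box_family d) a b :
  has_packing F a -> (b <= a)%N -> has_packing F b.
Proof.
move=> [g [Hg Hd]] Hba; exists (fun i => g (widen_ord Hba i)); split=> // i j Hij.
apply: Hd => E; apply: Hij; apply: val_inj; exact: (congr1 val E).
Qed.

Lemma packing_cat {d} (F : box_family d) a b (g1 : 'I_a -> box d) (g2 : 'I_b -> box d) :
 (forall i, F (g1 i)) -> (forall i j, i <> j -> boxes_disjoint (g1 i) (g1 j)) ->
 (forall i, F (g2 i)) -> (forall i j, i <> j -> boxes_disjoint (g2 i) (g2 j)) ->
 (forall i j, boxes_disjoint (g1 i) (g2 j)) -> has_packing F (a + b).
Proof.
move=> F1 D1 F2 D2 D12.
exists (fun k => match split k with inl i => g1 i | inr j => g2 j end); split.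
- by move=> k; case: (split k).
- move=> k l Hkl; case Ek: (split k) => [i|j]; case El: (split l) => [i'|j'].
  + apply: D1 => E; apply: Hkl; by rewrite -(splitK k) -(splitK l) Ek El E.
  + exact: D12.
  + apply: disj_sym; exact: D12.
  + apply: D2 => E; apply: Hkl; by rewrite -(splitK k) -(splitK l) Ek El E.
Qed.

Lemma pierced_union {d} (F1 F2 F : box_family d) k1 k2 :
  pierced_by F1 k1 -> pierced_by F2 k2 -> (forall B, F B -> F1 B \/ F2 B) ->
  pierced_by F (k1 + k2).
Proof.
move=> [p1 H1] [p2 H2] HF.
exists (fun k => match split k with inl i => p1 i | inr j => p2 j end) => B /HF [/H1|/H2] [i Hi].
- exists (lshift k2 i); by rewrite (unsplitK (inl i)).
- exists (rshift k1 i); by rewrite (unsplitK (inr i)).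
Qed.

Lemma fin_lt k (f : 'I_k -> R) t : (forall i, f i < t) -> exists u, u < t /\ forall i, f i <= u.
Proof.
elim: k f => [|k IH] f Hf.
  exists (t - 1); split; [lra| by case].
have [u [Hu1 Hu2]] := IH (fun i => f (widen_ord (leqnSn k) i)) (fun i => Hf _).
exists (Rmax u (f ord_max)); split.
  by apply: Rmax_lub_lt.
move=> i; case: (ltnP i k) => Hi.
  have -> : i = widen_ord (leqnSn k) (Ordinal Hi) by apply: val_inj.
  apply: Rle_trans (Hu2 _) (Rmax_l _ _).
have -> : i = ord_max by apply: val_inj => /=; have := ltn_ord i; lia.
exact: Rmax_r.
Qed.

Lemma fin_gt k (f : 'I_k -> R) t : (forall i, t < f i) -> exists u, t < u /\ forall i, u <= f i.
Proof.
move=> H; have [u [H1 H2]] := fin_lt _ (fun i => - f i) (- t) (fun i => Ropp_lt_contravar _ _ (H i)).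
exists (- u); split; first lra. move=> i; have := H2 i; lra.
Qed.

Lemma fin_ub k (f : 'I_k -> R) : exists u, forall i, f i < u.
Proof.
elim: k f => [|k IH] f; first by exists 0; case.
have [u Hu] := IH (fun i => f (widen_ord (leqnSn k) i)).
exists (Rmax u (f ord_max) + 1) => i; case: (ltnP i k) => Hi.
  have -> : i = widen_ord (leqnSn k) (Ordinal Hi) by apply: val_inj.
  have := Hu (Ordinal Hi); have := Rmax_l u (f ord_max); lra.
have -> : i = ord_max by apply: val_inj => /=; have := ltn_ord i; lia.
have := Rmax_r u (f ord_max); lra.
Qed.

Lemma fin_lb k (f : 'I_k -> R) : exists u, forall i, u < f i.
Proof.
have [u Hu] := fin_ub _ (fun i => - f i); exists (- u) => i; have := Hu i; lra.
Qed.

Lemma packing_sub {d} (F1 F2 : box_family d) k :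
  (forall B, F1 B -> F2 B) -> has_packing F1 k -> has_packing F2 k.
Proof. move=> H [g [Hg Hd]]; exists g; split=> // i; exact: H. Qed.

Lemma pierced_sub {d} (F1 F2 : box_family d) k :
  (forall B, F1 B -> F2 B) -> pierced_by F2 k -> pierced_by F1 k.
Proof. move=> H [p Hp]; exists p => B /H; exact: Hp. Qed.

Lemma helly1 {d} (G : box_family d) : family_wf G -> ~ has_packing G 2 ->
  exists p : point d, forall B, G B -> in_box p B.
Proof.
move=> Hwf Hn.
have key : forall B C c, G B -> G C -> lo B c <= hi C c.
{ move=> B C c HB HC; apply: Rnot_lt_le => Hlt; apply: Hn.
  exists (fun i : 'I_2 => if val i == 0%N then C else B); split.
  - by move=> i; case: (val i == 0%N).
  - move=> [[|[|i]] Hi] [[|[|j]] Hj] //= Hij;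
      try (exfalso; apply: Hij; apply: val_inj; done).
    + exact: disj_coord Hlt.
    + apply: disj_sym; exact: disj_coord Hlt. }
case: (classic (exists B, G B)) => [[B0 HB0]|Hno]; last first.
  exists (fun _ => 0) => B HB; exfalso; apply: Hno; by exists B.
pose E c := fun x => exists B, G B /\ x = lo B c.
have Hb : forall c, bound (E c).
  move=> c; exists (hi B0 c) => x [B [HB ->]]; exact: key.
have Hne : forall c, exists x, E c x by move=> c; exists (lo B0 c); exists B0.
exists (fun c => proj1_sig (completeness _ (Hb c) (Hne c))) => B HB c.
case: (completeness _ (Hb c) (Hne c)) => /= m [Hub Hlub]; split.
- apply: Hub; by exists B.
- apply: Hlub => x [C [HC ->]]; exact: key.
Qed.

Definition below {d} (G : box_family d) c s : box_family d := fun B => G B /\ hi B c < s.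
Definition above {d} (G : box_family d) c s : box_family d := fun B => G B /\ s < lo B c.

Lemma join2 {d} (G : box_family d) c k s : ~ has_packing G (k + k) ->
  has_packing (below G c s) k -> forall g : 'I_k -> box d, (forall i, G (g i)) ->
  (forall i j, i <> j -> boxes_disjoint (g i) (g j)) -> (forall i, s <= lo (g i) c) -> False.
Proof.
move=> Hn [g2 [Hg2 Hd2]] g Hg Hd Hs; apply: Hn.
apply: (@packing_cat _ G k k g2 g) => //.
- by move=> i; case: (Hg2 i).
- move=> i j; apply: (disj_coord _ _ c); case: (Hg2 i) => _ h; have := Hs j; lra.
Qed.

Lemma split_cut {d} (G : box_family d) c k : ~ has_packing G (k + k) ->
  exists t, ~ has_packing (below G c t) k /\ ~ has_packing (above G c t) k.
Proof.
move=> Hn.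
case: (classic (exists s0, has_packing (below G c s0) k)) => [[s0 Hs0]|Hno]; last first.
  have HG : ~ has_packing G k.
    move=> [g [Hg Hd]]; have [u Hu] := fin_ub _ (fun i => hi (g i) c).
    apply: Hno; exists u; exists g; split; last exact: Hd.
    move=> i; split; [exact: Hg| exact: Hu].
  exists 0; split=> H; apply: HG; apply: packing_sub H; by move=> B [].
pose S := fun s => ~ has_packing (below G c s) k.
have Hbd : bound S.
  exists s0 => s Hs; apply: Rnot_lt_le => Hlt; apply: Hs.
  apply: packing_sub Hs0 => B [HB HB']; split=> //; lra.
have Hne : exists s, S s.
  apply: NNPP => Hall.
  have [g [Hg Hd]] : has_packing (below G c 0) k by apply: NNPP => H; apply: Hall; exists 0.
  have [u Hu] := fin_lb _ (fun i => lo (g i) c).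
  apply: (@join2 _ G c k u Hn _ g) => //.
  - apply: NNPP => H; apply: Hall; by exists u.
  - by move=> i; case: (Hg i).
  - by move=> i; apply: Rlt_le; apply: Hu.
have [t [Hub Hlub]] := completeness S Hbd Hne.
exists t; split.
- move=> [g [Hg Hd]].
  have [u [Hut Hu]] := fin_lt _ (fun i => hi (g i) c) t (fun i => proj2 (Hg i)).
  have [s [Ss Hus]] : exists s, S s /\ u < s.
    apply: NNPP => H; have : t <= u.
      apply: Hlub => s Ss; apply: Rnot_lt_le => Hlt; apply: H; by exists s.
    lra.
  apply: Ss; exists g; split=> // i; split; first by case: (Hg i).
  have := Hu i; lra.
- move=> [g [Hg Hd]].
  have [u [Hut Hu]] := fin_gt _ (fun i => lo (g i) c) t (fun i => proj2 (Hg i)).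
  have Su : ~ S u by move=> Su; have := Hub u Su; lra.
  apply: (@join2 _ G c k u Hn _ g) => //.
  - exact: NNPP.
  - by move=> i; case: (Hg i).
Qed.

Definition pb (P : Prop) : bool := if excluded_middle_informative P then true else false.
Lemma pbP P : reflect P (pb P).
Proof. rewrite /pb; case: excluded_middle_informative => H; by constructor. Qed.

Definition box0 {d} : box d := @Box d (fun _ => 0) (fun _ => 0).

Lemma max_packing {d} (K : box_family d) n : ~ has_packing K n.+1 ->
  exists m, (m <= n)%N /\ has_packing K m /\ ~ has_packing K m.+1.
Proof.
elim: n => [|n IH] Hn.
  exists 0%N; split=> //; split=> //; exists (fun _ => box0); split; by case.
case: (classic (has_packing K n.+1)) => H.
  by exists n.+1; split.
have [m [Hm1 Hm2]] := IH H; exists m; split=> //; lia.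
Qed.

Lemma card_inj_bound N (A : {set 'I_N}) (f : 'I_N -> nat) r :
  {in A &, injective f} -> (forall i, i \in A -> (f i < r)%N) -> (#|A| <= r)%N.
Proof.
case: r => [|r] Hinj Hr.
  rewrite leqn0 cards_eq0; apply/eqP/setP => j; rewrite inE.
  by apply/negP => /Hr.
rewrite -(card_in_imset (f := fun i => (inord (f i) : 'I_r.+1))).
  by apply: leq_trans (max_card _) _; rewrite card_ord.
move=> i j Hi Hj E; apply: Hinj => //.
have := congr1 val E; rewrite /= !inordK //; exact: Hr.
Qed.

Definition Ebox e (A : R) (j : nat) : box e.+1 :=
  let pt := fun c : 'I_e.+1 => if c == ord0 then A + 1 + INR j else 0 in @Box e.+1 pt pt.

Lemma Ebox_in e A j : in_box (lo (Ebox e A j)) (Ebox e A j).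
Proof. move=> c /=; lra. Qed.

Lemma Ebox_disj e A i j : i <> j -> boxes_disjoint (Ebox e A i) (Ebox e A j).
Proof.
move=> Hij [x [h1 h2]]; apply: Hij; apply: INR_eq.
have := h1 ord0; have := h2 ord0; rewrite /=; lra.
Qed.

Lemma pad e n (M A : R) :
 (forall F : box_family e.+1, family_wf F -> nu_eq F n -> exists k, pierced_by F k /\ INR k <= M) ->
 forall K : box_family e.+1, family_wf K -> (forall Q, K Q -> hi Q ord0 <= A) ->
   ~ has_packing K n.+1 -> exists k, pierced_by K k /\ INR k <= M.
Proof.
move=> Hyp K Kwf KA Kn.
have [m [Hmn [Hm Hm1]]] := max_packing _ _ Kn.
pose K' := fun Q => K Q \/ exists j, (j < n - m)%N /\ Q = Ebox e A j.
have K'wf : family_wf K'.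
  move=> Q [/Kwf //|[j [_ ->]]] c /=; lra.
have HK' : nu_eq K' n.
  split.
  - rewrite -(subnKC Hmn); case: Hm => [g1 [Hg1 Hd1]].
    apply: (@packing_cat _ K' m (n - m) g1 (fun j => Ebox e A j)) => //.
    + by move=> i; left.
    + move=> i; right; exists i; split=> //.
    + move=> i j Hij; apply: Ebox_disj => E; apply: Hij; exact: val_inj.
    + move=> i j; apply: (disj_coord _ _ ord0) => /=.
      have := KA _ (Hg1 i); have := pos_INR j; lra.
  - move=> [g [Hg Hd]].
    pose SK := [set i | pb (K (g i))].
    pose jf := fun i => match excluded_middle_informative
       (exists j, (j < n - m)%N /\ g i = Ebox e A j) with
       | left H => proj1_sig (constructive_indefinite_description _ H)
       | right _ => 0%N end.
    have Hjf : forall i, i \in ~: SK -> (jf i < n - m)%N /\ g i = Ebox e A (jf i).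
      move=> i; rewrite !inE => /pbP Hi.
      have Hex : exists j, (j < n - m)%N /\ g i = Ebox e A j.
        by case: (Hg i).
      rewrite /jf; case: excluded_middle_informative => // H.
      by case: (constructive_indefinite_description _ H).
    have Hc : (#|~: SK| <= n - m)%N.
      apply: (@card_inj_bound _ _ jf).
        move=> i j Hi Hj E; apply: NNPP => Hij.
        have [_ Ei] := Hjf i Hi; have [_ Ej] := Hjf j Hj.
        apply: (Hd i j Hij); exists (lo (g i)); split.
        * rewrite Ei; exact: Ebox_in.
        * rewrite Ei Ej E; exact: Ebox_in.
      by move=> i /Hjf [].
    have Hs : (m.+1 <= #|SK|)%N.
      have := cardsC SK; rewrite card_ord; lia.
    apply: Hm1; apply: (@packing_mono _ _ _ _ _ Hs).
    exists (fun a => g (enum_val a)); split.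
    + move=> a; have := enum_valP a; rewrite inE; by move/pbP.
    + move=> a b Hab; apply: Hd => E; apply: Hab; exact: enum_val_inj.
have [k [Hk Hkm]] := Hyp K' K'wf HK'.
exists k; split=> //; apply: pierced_sub Hk => Q HQ; by left.
Qed.

Definition wid {e} (c : 'I_e.+1) : 'I_e.+2 := widen_ord (leqnSn e.+1) c.
Definition cmp (i : nat) (x : R) : R := 4 * INR i + atan x.
Definition sig {e} (i : nat) (B : box e.+2) : box e.+1 :=
  @Box e.+1 (fun c => if c == ord0 then cmp i (lo B (wid c)) else lo B (wid c))
            (fun c => if c == ord0 then cmp i (hi B (wid c)) else hi B (wid c)).
Definition prj {e} (i : nat) (x : point e.+2) : point e.+1 :=
  fun c => if c == ord0 then cmp i (x (wid c)) else x (wid c).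

Lemma atan_le x y : x <= y -> atan x <= atan y.
Proof. move=> [H|->]; [left; exact: atan_increasing| right; done]. Qed.

Lemma cmp_le i x y : x <= y -> cmp i x <= cmp i y.
Proof. rewrite /cmp => /atan_le; lra. Qed.

Lemma cmp_bound i x : 4 * INR i - 2 < cmp i x < 4 * INR i + 2.
Proof. rewrite /cmp; have := atan_bound x; have := PI_4; lra. Qed.

Lemma prj_in e i (x : point e.+2) B : in_box x B -> in_box (prj i x) (sig i B).
Proof.
move=> H c; rewrite /prj /=; case: (c == ord0); last exact: H.
have [h1 h2] := H (wid c); split; exact: cmp_le.
Qed.

Lemma sig_wf e i (B : box e.+2) : box_wf B -> box_wf (sig i B).
Proof. move=> H c /=; case: (c == ord0); [exact: cmp_le | exact: H]. Qed.

Definition slot (y : R) : nat :=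
  match excluded_middle_informative (exists i, 4 * INR i - 2 < y < 4 * INR i + 2) with
  | left H => proj1_sig (constructive_indefinite_description _ H)
  | right _ => 0%N end.

Lemma slot_uniq i j y : 4 * INR i - 2 < y < 4 * INR i + 2 ->
  4 * INR j - 2 < y < 4 * INR j + 2 -> i = j.
Proof.
move=> Hi Hj; case: (Nat.lt_total i j) => [H|[//|H]].
- have := le_INR _ _ H; rewrite S_INR; lra.
- have := le_INR _ _ H; rewrite S_INR; lra.
Qed.

Lemma slot_eq i y : 4 * INR i - 2 < y < 4 * INR i + 2 -> slot y = i.
Proof.
move=> H; rewrite /slot; case: excluded_middle_informative => [H'|H']; last first.
  by exfalso; apply: H'; exists i.
case: (constructive_indefinite_description _ H') => j Hj /=.
exact: slot_uniq Hj H.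
Qed.

Definition lift {e} (t : nat -> R) (q : point e.+1) : point e.+2 :=
  fun j => if (val j < e.+1)%N then
     (if val j == 0%N then tan (q ord0 - 4 * INR (slot (q ord0))) else q (inord j))
   else t (slot (q ord0)).

Lemma lift_in e (t : nat -> R) i (B : box e.+2) q :
  lo B ord_max <= t i <= hi B ord_max -> in_box q (sig i B) -> in_box (lift t q) B.
Proof.
move=> Ht Hq.
have H0 := Hq ord0; rewrite /= in H0.
have Hs : slot (q ord0) = i.
  apply: slot_eq; have := cmp_bound i (lo B (wid ord0)); have := cmp_bound i (hi B (wid ord0)).
  lra.
move=> j; rewrite /lift Hs; case: (ltnP j e.+1) => Hj.
- case: eqP => Hj0.
  + have -> : j = wid ord0 by apply: val_inj.
    set z := q ord0 - 4 * INR i.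
    have Hz1 : atan (lo B (wid ord0)) <= z <= atan (hi B (wid ord0)) by rewrite /z /cmp in H0 *; lra.
    have Hz : - (PI / 2) < z < PI / 2.
      have := atan_bound (lo B (wid ord0)); have := atan_bound (hi B (wid ord0)); lra.
    have Ez := atan_tan z Hz.
    split; apply: Rnot_lt_le => Hlt.
    * have := atan_increasing _ _ Hlt; rewrite Ez; lra.
    * have := atan_increasing _ _ Hlt; rewrite Ez; lra.
  + have Hc := Hq (inord j).
    have Ew : wid (inord j : 'I_e.+1) = j by apply: val_inj; rewrite /= inordK.
    have Ne : (inord j : 'I_e.+1) == ord0 = false.
      by apply/eqP => E; apply: Hj0; have := congr1 val E; rewrite /= inordK.
    by rewrite /= Ne Ew in Hc.
- have -> : j = ord_max by apply: val_inj => /=; have := ltn_ord j; lia.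
  exact: Ht.
Qed.

Lemma layer e n (M : R) (F : box_family e.+2) :
  (forall F : box_family e.+1, family_wf F -> nu_eq F n ->
     exists k, pierced_by F k /\ INR k <= M) ->
  family_wf F -> ~ has_packing F n.+1 ->
  forall L N (G : nat -> box_family e.+2),
  (forall i B, (i < N)%N -> G i B -> F B) ->
  (forall i j B C, (i < N)%N -> (j < N)%N -> i <> j -> G i B -> G j C -> boxes_disjoint B C) ->
  (forall i, (i < N)%N -> ~ has_packing (G i) (2 ^ L.+1)) ->
  exists k, pierced_by (fun B => exists i, (i < N)%N /\ G i B) k /\
    INR k <= INR (N * 2 ^ L) + INR L * M.
Proof.
move=> Hyp Fwf Fn L; elim: L => [|L IH] N G HGF Hsep Hpk.
  have H : forall i : 'I_N, exists p, forall B, G i B -> in_box p B.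
    move=> i; apply: helly1; first by move=> B HB; apply: Fwf; exact: (HGF i).
    exact: Hpk.
  exists N; split.
    exists (fun i => proj1_sig (constructive_indefinite_description _ (H i))).
    move=> B [i [Hi HB]]; exists (Ordinal Hi).
    by case: (constructive_indefinite_description _ (H (Ordinal Hi))) => p Hp /=; apply: Hp.
  rewrite expn0 muln1 /=; lra.
have Ht : forall i, exists t, (i < N)%N ->
    ~ has_packing (below (G i) ord_max t) (2 ^ L.+1) /\
    ~ has_packing (above (G i) ord_max t) (2 ^ L.+1).
  move=> i; case: (ltnP i N) => Hi.
    have Hp2 : ~ has_packing (G i) (2 ^ L.+1 + 2 ^ L.+1).
      have -> : (2 ^ L.+1 + 2 ^ L.+1 = 2 ^ L.+2)%N by rewrite (expnS 2 L.+1); lia.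
      exact: Hpk.
    have [t Ht] := split_cut _ ord_max _ Hp2.
    by exists t.
  by exists 0 => H; exfalso; lia.
pose t := fun i => proj1_sig (constructive_indefinite_description _ (Ht i)).
have Htp : forall i, (i < N)%N ->
    ~ has_packing (below (G i) ord_max (t i)) (2 ^ L.+1) /\
    ~ has_packing (above (G i) ord_max (t i)) (2 ^ L.+1).
  move=> i Hi; rewrite /t; case: (constructive_indefinite_description _ (Ht i)) => s Hs /=.
  exact: Hs.
pose G' := fun j B => G (j %/ 2)%N B /\
   (if (j %% 2 == 1)%N then t (j %/ 2)%N < lo B ord_max else hi B ord_max < t (j %/ 2)%N).
have A1 : forall i B, (i < 2 * N)%N -> G' i B -> F B.
{ move=> i B Hi [HB _]; apply: (HGF (i %/ 2)%N) => //; lia. }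
have A2 : forall i j B C, (i < 2 * N)%N -> (j < 2 * N)%N -> i <> j -> G' i B -> G' j C -> boxes_disjoint B C.
{ move=> i j B C Hi Hj Hij [HB HB'] [HC HC'].
    case: (eqVneq (i %/ 2)%N (j %/ 2)%N) => Eij.
    - have Hm : (i %% 2 <> j %% 2)%N by lia.
      case: eqP HB' => Hi1 HB'; case: eqP HC' => Hj1 HC'.
      + exfalso; lia.
      + apply: (disj_sym); apply: (disj_coord _ _ ord_max); rewrite Eij in HB'; lra.
      + apply: (disj_coord _ _ ord_max); rewrite Eij in HB'; lra.
      + exfalso; lia.
    - apply: (Hsep (i %/ 2)%N (j %/ 2)%N) => //; lia. }
have A3 : forall j, (j < 2 * N)%N -> ~ has_packing (G' j) (2 ^ L.+1).
{ move=> j Hj; have [Hb Ha] := Htp (j %/ 2)%N ltac:(lia).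
    case E: (j %% 2 == 1)%N.
    - move=> Hp; apply: Ha; apply: packing_sub Hp => B [HB HB']; rewrite E in HB'; by split.
    - move=> Hp; apply: Hb; apply: packing_sub Hp => B [HB HB']; rewrite E in HB'; by split. }
have [k1 [Hk1 Hk1b]] := IH (2 * N)%N G' A1 A2 A3.
pose Kc := fun Q => exists i B, (i < N)%N /\ G i B /\ lo B ord_max <= t i <= hi B ord_max /\
   Q = sig i B.
have B1 : family_wf Kc.
{ move=> Q [i [B [Hi [HB [_ ->]]]]]; apply: sig_wf; apply: Fwf; exact: (HGF i). }
have B2 : forall Q, Kc Q -> hi Q ord0 <= 4 * INR N.
{ move=> Q [i [B [Hi [HB [_ ->]]]]] /=.
    have := cmp_bound i (hi B (wid ord0)); have := le_INR _ _ (elimT leP Hi); rewrite S_INR; lra. }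
have B3 : ~ has_packing Kc n.+1.
{ move=> [g [Hg Hd]].
    have Hch : forall a, exists iB : nat * box e.+2, (iB.1 < N)%N /\ G iB.1 iB.2 /\ g a = sig iB.1 iB.2.
      move=> a; have [i [B [Hi [HB [_ E]]]]] := Hg a; by exists (i, B).
    pose iB := fun a => proj1_sig (constructive_indefinite_description _ (Hch a)).
    have HiB : forall a, ((iB a).1 < N)%N /\ G (iB a).1 (iB a).2 /\ g a = sig (iB a).1 (iB a).2.
      move=> a; rewrite /iB; by case: (constructive_indefinite_description _ (Hch a)).
    apply: Fn; exists (fun a => (iB a).2); split.
      move=> a; have [H1 [H2 _]] := HiB a; exact: (HGF _ _ H1 H2).
    move=> a b Hab [x [hx1 hx2]].
    have [Ha1 [Ha2 Ea]] := HiB a; have [Hb1 [Hb2 Eb]] := HiB b.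
    case: (eqVneq (iB a).1 (iB b).1) => Eab.
    - apply: (Hd a b Hab); exists (prj (iB a).1 x); rewrite Ea Eb; split.
      + exact: prj_in.
      + rewrite Eab; exact: prj_in.
    - apply: (Hsep _ _ _ _ Ha1 Hb1 _ Ha2 Hb2); last by exists x.
      by move/eqP; rewrite (negbTE Eab). }
have [k2 [Hk2 Hk2b]] := pad _ _ _ _ Hyp Kc B1 B2 B3.
have Hk2' : pierced_by (fun B => exists i, (i < N)%N /\ G i B /\ lo B ord_max <= t i <= hi B ord_max) k2.
  case: Hk2 => q Hq; exists (fun a => lift t (q a)).
  move=> B [i [Hi [HB Hti]]].
  have [a Ha] := Hq (sig i B) (ex_intro _ i (ex_intro _ B (conj Hi (conj HB (conj Hti erefl))))).
  exists a; exact: (lift_in _ _ _ _ _ Hti Ha).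
exists (k1 + k2)%N; split.
  apply: (pierced_union _ _ _ _ _ Hk1 Hk2') => B [i [Hi HB]].
  case: (Rlt_le_dec (hi B ord_max) (t i)) => H1.
    left; exists (2 * i)%N; split; first lia. rewrite /G'.
    have -> : ((2 * i) %/ 2 = i)%N by lia.
    have -> : ((2 * i) %% 2 == 1)%N = false by apply/eqP; lia.
    by split.
  case: (Rlt_le_dec (t i) (lo B ord_max)) => H2.
    left; exists (2 * i).+1%N; split; first lia. rewrite /G'.
    have -> : ((2 * i).+1 %/ 2 = i)%N by lia.
    have -> : ((2 * i).+1 %% 2 == 1)%N = true by apply/eqP; lia.
    by split.
  right; exists i; split=> //; split=> //; lra.
have -> : INR (k1 + k2) = INR k1 + INR k2 by apply: plus_INR.
have -> : (N * 2 ^ L.+1 = 2 * N * 2 ^ L)%N by rewrite expnS; lia.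
rewrite S_INR; lra.
Qed.

Lemma INR_exp2 m : INR (2 ^ m)%N = 2 ^ m.
Proof.
elim: m => [|m IH]; first by rewrite expn0.
have -> : (2 ^ m.+1 = 2 ^ m + 2 ^ m)%N by rewrite expnS; lia.
rewrite (_ : INR (2 ^ m + 2 ^ m) = INR (2 ^ m) + INR (2 ^ m)); last exact: plus_INR.
rewrite IH /=; lra.
Qed.

Theorem lemma1 (n d : nat) (M : R) :
  (1 <= n)%N -> (2 <= d)%N ->
  (forall F : box_family (d - 1)%N, family_wf F -> nu_eq F n ->
     exists k : nat, pierced_by F k /\ (INR k <= M)%R) ->
  forall F : box_family d, family_wf F -> nu_eq F n ->
    exists k : nat, pierced_by F k /\
      (INR k <= INR n + log2 (INR n) * M)%R.
Proof.
move=> Hn Hd Hyp F Fwf [Fp Fn].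
case: d Hd Hyp F Fwf Fp Fn => [|[|e]] // _ Hyp F Fwf Fp Fn.
have Hyp' : forall F : box_family e.+1, family_wf F -> nu_eq F n ->
   exists k, pierced_by F k /\ INR k <= M := Hyp.
have HM : 0 <= M.
  have H0 : ~ has_packing (fun _ : box e.+1 => False) n.+1.
    by move=> [g [Hg _]]; apply: (Hg ord0).
  have [k [_ Hk]] := pad _ _ _ 0 Hyp' (fun _ => False) (fun _ H => False_ind _ H)
     (fun _ H => False_ind _ H) H0.
  have := pos_INR k; lra.
set L := trunc_log 2 n.
have HL1 : (2 ^ L <= n)%N by apply: trunc_logP.
have HL2 : (n < 2 ^ L.+1)%N by apply: trunc_log_ltn.
have [k [Hk Hkb]] := layer _ _ _ _ Hyp' Fwf Fn L 1 (fun _ => F)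
  (fun i B _ HB => HB) (fun i j B C Hi Hj Hij => ltac:(exfalso; lia))
  (fun i _ H => Fn (packing_mono _ _ _ H HL2)).
exists k; split.
  apply: pierced_sub Hk => B HB; by exists 0%N.
rewrite mul1n in Hkb.
have E1 : INR (2 ^ L) <= INR n by apply: le_INR; apply/leP.
have Hn0 : 0 < INR n by apply: lt_0_INR; apply/leP.
have Hln2 : 0 < ln 2 by have := ln_lt_2; lra.
have E2 : INR L <= log2 (INR n).
  rewrite /log2; apply: (Rmult_le_reg_r (ln 2)) => //.
  rewrite /Rdiv Rmult_assoc Rinv_l; last lra.
  rewrite Rmult_1_r -ln_pow; last lra.
  have Hp : INR (2 ^ L) = 2 ^ L by apply: INR_exp2.
  rewrite -Hp.
  case: (Rle_lt_or_eq_dec _ _ E1) => H; last by rewrite H; lra.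
  left; apply: ln_increasing => //; rewrite Hp; apply: pow_lt; lra.
have := Rmult_le_compat_r M _ _ HM E2; lra.
Qed.
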